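(* If a graph $G$ has at most $a$ vertices of degree greater than $D$, then $G$ has clique-based $\infty$-admissibility at most $a+D$.
   Context: All graphs are finite and simple. Given an ordering $v_1,\ldots,v_n$ of $V(G)$, the $\infty$-backconnectivity of $v_k$ is the maximum number of paths (of any length) from $v_k$ to $\{v_1,\ldots,v_{k-1}\}$ that pairwise intersect only in $v_k$; the $\infty$-admissibility of the ordering is the maximum $\infty$-backconnectivity over its vertices. For $X\subseteq V(G)$, $G$ has $X$-based $\infty$-admissibility at most $t$ if there is an ordering $v_1,\ldots,v_n$ of $V(G)$ with $\infty$-admissibility at most $t$ and $X=\{v_1,\ldots,v_{|X|}\}$. $G$ has clique-based $\infty$-admissibility at most $t$ if it has $X$-based $\infty$-admissibility at most $t$ for every $X\subseteq V(G)$ inducing a clique in $G$. *)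

(* Defs.v *)
(* A finite simple graph is a symmetric irreflexive
   relation e on a finType T (vertex set = T). *)
From mathcomp Require Import all_boot.
Set Implicit Arguments.
Unset Strict Implicit.
Unset Printing Implicit Defensive.

Section Adm.
Variables (T : finType) (e : rel T).

Definition deg (v : T) : nat := #|[set u | e v u]|.

(* v :: p is a path (distinct vertices, consecutive ones adjacent) of
   length >= 1 from v to the set S (its last vertex lies in S). *)
Definition path_to (v : T) (S : {set T}) (p : seq T) : bool :=
  [&& p != [::], path e v p, uniq (v :: p) & last v p \in S].

(* A family of paths v :: p_i from v to S that pairwise intersect only in v
   (each p_i is the path with its first vertex v removed). *)
Definition fan (v : T) (S : {set T}) (F : seq (seq T)) : bool :=
  all (path_to v S) F && pairwise (fun p q => ~~ has (mem q) p) F.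

Definition backconn_le (v : T) (S : {set T}) (t : nat) : Prop :=
  forall F, fan v S F -> size F <= t.

Definition ordering (s : seq T) : bool := uniq s && (size s == #|T|).

Definition adm_le (s : seq T) (t : nat) : Prop :=
  forall pre v post, s = pre ++ v :: post -> backconn_le v [set x in pre] t.

Definition based_adm_le (X : {set T}) (t : nat) : Prop :=
  exists s, [/\ ordering s, adm_le s t & X = [set x in take #|X| s]].

Definition is_clique (X : {set T}) : Prop :=
  forall x y, x \in X -> y \in X -> x != y -> e x y.

Definition clique_based_adm_le (t : nat) : Prop :=
  forall X : {set T}, is_clique X -> based_adm_le X t.

End Adm.

(* Main.v *)
Require Import Defs.
From mathcomp Require Import all_boot.
Set Implicit Arguments.
Unset Strict Implicit.
Unset Printing Implicit Defensive.

Lemma uniq_map_disj (T : finType) (f : seq T -> T) (F : seq (seq T)) :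
  (forall p, p \in F -> f p \in p) ->
  pairwise (fun p q => ~~ has (mem q) p) F -> uniq (map f F).
Proof.
elim: F => [|p F IH] //= Hf /andP[Hall Hpw].
rewrite IH ?andbT; last 2 first.
- by move=> q Hq; apply: Hf; rewrite inE Hq orbT.
- exact: Hpw.
apply/mapP => -[q Hq Eq].
have := allP Hall q Hq => /hasPn /(_ (f p)).
have Hp : f p \in p by apply: Hf; rewrite inE eqxx.
move/(_ Hp); rewrite /= Eq.
by rewrite Hf // inE Hq orbT.
Qed.

Lemma size_le_card (T : finType) (s : seq T) (A : {set T}) :
  uniq s -> {subset s <= A} -> size s <= #|A|.
Proof.
move=> Us Hs; rewrite -(card_uniqP Us).
by apply: subset_leq_card; apply/subsetP.
Qed.

Lemma fan_le_card (T : finType) (e : rel T) v S F :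
  fan e v S F -> size F <= #|S|.
Proof.
case/andP=> Hall Hpw.
rewrite -(size_map (last v)); apply: size_le_card.
  apply: uniq_map_disj Hpw => p /(allP Hall) /and4P[Hn _ _ _].
  by case: p Hn => [|x p] //= _; rewrite mem_last.
by move=> x /mapP[p /(allP Hall) /and4P[_ _ _ Hl] ->].
Qed.

Lemma fan_le_deg (T : finType) (e : rel T) v S F :
  fan e v S F -> size F <= deg e v.
Proof.
case/andP=> Hall Hpw.
rewrite -(size_map (head v)); apply: size_le_card.
  apply: uniq_map_disj Hpw => p /(allP Hall) /and4P[Hn _ _ _].
  by case: p Hn => [|x p] //= _; rewrite inE eqxx.
move=> x /mapP[p /(allP Hall) /and4P[Hn Hp _ _] ->].
by case: p Hn Hp => [|y p] //= _ /andP[H _]; rewrite inE.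
Qed.

Lemma prefix_sub (T : eqType) (pre post P Q : seq T) (v : T) :
  pre ++ v :: post = P ++ Q -> uniq (P ++ Q) -> v \in P -> {subset pre <= P}.
Proof.
move=> E U vP.
case: (leqP (size P) (size pre)) => H.
  have : v \in drop (size P) (pre ++ v :: post).
    rewrite drop_cat; case: ifP => H2.
      by rewrite mem_cat inE eqxx orbT.
    have -> : size P - size pre = 0 by apply/eqP; rewrite subn_eq0.
    by rewrite drop0 inE eqxx.
  rewrite E drop_size_cat // => vQ.
  by move: U; rewrite cat_uniq => /and3P[_ /hasP[]]; exists v.
have : take (size pre) (pre ++ v :: post) = take (size pre) P.
  by rewrite E take_cat H.
rewrite take_size_cat // => ->; exact: mem_take.
Qed.

Theorem lemma24 (T : finType) (e : rel T) (e_sym : symmetric e)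
  (e_irr : irreflexive e) (a D : nat) :
  #|[set v | D < deg e v]| <= a ->
  clique_based_adm_le e (a + D).
Proof.
set H := [set v | D < deg e v] => Ha X Xcl.
set P := enum X ++ enum (H :\: X).
set C := enum (~: (X :|: H)).
have UP : uniq (P ++ C).
  have UP1 : uniq P.
    rewrite cat_uniq !enum_uniq andbT /=.
    by apply/hasPn => x; rewrite !mem_enum !inE => /andP[].
  rewrite cat_uniq UP1 enum_uniq andbT /=.
  apply/hasPn => x; rewrite !mem_enum !inE negb_or => /andP[/negPf Hx /negPf Hh].
  by rewrite mem_cat !mem_enum !inE Hx Hh.
have memPC : forall x, x \in P ++ C.
  move=> x; rewrite /P /C !mem_cat !mem_enum !inE.
  by case: (x \in X); case: (D < deg e x).
exists (P ++ C); split.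
- rewrite /ordering UP /=; apply/eqP.
  rewrite -(card_uniqP UP); apply: eq_card => x.
  by rewrite memPC.
- move=> pre v post E F HF.
  have Upre : v \notin pre.
    by move: UP; rewrite E cat_uniq => /and3P[_ /hasPn /(_ v) + _];
      rewrite inE eqxx /= => /(_ isT).
  case: (boolP (v \in X :|: H)) => vXH; last first.
    apply: leq_trans (fan_le_deg HF) _.
    move: vXH; rewrite !inE negb_or => /andP[_].
    by rewrite -leqNgt => /leq_trans; apply; rewrite leq_addl.
  have vP : v \in P by rewrite /P mem_cat !mem_enum in_setD; case/setUP: vXH => ->;
    rewrite ?orbT //; case: (v \in X).
  have sub := prefix_sub (esym E) UP vP.
  apply: leq_trans (fan_le_card HF) _.
  have Hs : [set x in pre] \subset (X :|: H) :\ v.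
    apply/subsetP => x; rewrite inE => xp; rewrite in_setD1.
    have -> : x \in X :|: H.
      move: (sub x xp); rewrite /P mem_cat !mem_enum in_setD in_setU.
      by case: (x \in X); case: (x \in H).
    rewrite andbT; apply/eqP => Exv; subst x.
    by rewrite xp in Upre.
  apply: leq_trans (subset_leq_card Hs) _.
  case: (boolP (X \subset H)) => XH.
    have -> : X :|: H = H by apply/setUidPr.
    apply: leq_trans (subset_leq_card (subD1set H v)) _.
    by apply: leq_trans Ha _; rewrite leq_addr.
  have [x xX xH] : exists2 x, x \in X & x \notin H.
    by move/subsetPn: XH => [x ? ?]; exists x.
  have Xd : #|X :\ x| <= D.
    have : X :\ x \subset [set u | e x u].
      apply/subsetP => y; rewrite !inE => /andP[yx yX].
      by apply: Xcl; rewrite // eq_sym.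
    move/subset_leq_card => /leq_trans; apply.
    by move: xH; rewrite inE -leqNgt.
  have := cardsD1 v (X :|: H); rewrite vXH add1n => Ev.
  have := cardsU X H; have := cardsD1 x X; rewrite xX add1n => Ex.
  move=> EU.
  have : #|X :|: H| <= #|X| + #|H| by rewrite cardsU leq_subr.
  rewrite Ex Ev; move: Xd Ha; clear; move=> Xd Ha; rewrite addSn ltnS => h.
  apply: leq_trans h _; rewrite addnC; exact: leq_add.
- rewrite /P.
  rewrite -catA take_size_cat; last by rewrite cardE.
  by apply/setP => x; rewrite inE mem_enum.
Qed.
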